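(* Let $X$ be a Banach space, let $K\subset X$ be a nonempty weakly compact convex set and let $T\colon K\to K$ be a $\mathfrak{cm}$-nonexpansive map without fixed points such that $K$ is minimal for $T$. Let $\mathcal{M}$ be a nonempty bounded convex subset of $[K]$ with $[T](\mathcal{M})\subseteq\mathcal{M}$. Then for all $x\in K$ and all $N\in\mathbb{N}$, $$\sup_{[v_i]\in\mathcal{M}}\ \limsup_{i\to\infty}\ \sup_{A\subset\{1,\dots,N\}}\Big\|\frac1N\sum_{k\in A}(v_{i+k}-x)\Big\|=\operatorname{diam}K.$$
   Context: For a bounded convex set $C$, a nonexpansive map $T\colon C\to C$ is $\mathfrak{cm}$-nonexpansive if for all $n\in\mathbb{N}$, $y\in C$ and sequences $(u_i)_{i=1}^\infty\subset C$: $\limsup_{i\to\infty}\sup_{A\subset\{1,\dots,n\}}\|\sum_{k\in A}(Tu_{i+k}-Ty)\|\le\limsup_{i\to\infty}\sup_{A\subset\{1,\dots,n\}}\|\sum_{k\in A}(u_{i+k}-y)\|$. $K$ is minimal for $T$ if $T(K)\subseteq K$ and no proper nonempty closed convex subset of $K$ is $T$-invariant. $[X]$ denotes the quotient $\ell_\infty(X)/c_0(X)$ with norm $\|[v_i]\|=\limsup_{i\to\infty}\|v_i\|$, where $[v_i]$ is the class of the bounded sequence $(v_i)$; $[K]=\{[v_i]\in[X]: v_i\in K\ \forall i\}$ and $[T]\colon[K]\to[K]$, $[T]([v_i])=[T(v_i)]$. (The quantity $\limsup_i\sup_A\|\frac1N\sum_{k\in A}(v_{i+k}-x)\|$ does not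 depend on the representative $(v_i)$.) *)

(* Defs.v *)
From HB Require Import structures.
From mathcomp Require Import all_boot all_order all_algebra.
From mathcomp Require Import all_classical all_reals all_analysis.
Set Implicit Arguments. Unset Strict Implicit. Unset Printing Implicit Defensive.
Import Order.TTheory GRing.Theory Num.Theory.
Import numFieldNormedType.Exports.
Local Open Scope classical_set_scope.
Local Open Scope ring_scope.

Section Defs.
Context {R : realType} {X : normedModType R}.

Definition cont_lin_functional (f : X -> R) : Prop :=
  (forall (a : R) (x y : X), f (a *: x + y) = a * f x + f y) /\ continuous f.

(** x is a cluster point of the filter F for the weak topology of X:
    every basic weak neighbourhood of x meets every element of F *)
Definition weak_cluster (F : set_system X) (x : X) : Prop :=
  forall (n : nat) (f : 'I_n -> X -> R), (forall j, cont_lin_functional (f j)) ->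
  forall e : R, 0 < e -> forall A, F A ->
  exists y, A y /\ forall j, `|f j y - f j x| < e.

(** weak compactness (filter characterisation of compactness in the weak topology) *)
Definition weakly_compact (K : set X) : Prop :=
  forall F : set_system X, ProperFilter F -> F K -> exists x, K x /\ weak_cluster F x.

Definition is_convex (C : set X) : Prop :=
  forall x y t, C x -> C y -> 0 <= t <= 1 -> C (t *: x + (1 - t) *: y).

Definition bounded_set (C : set X) : Prop :=
  exists M : R, forall x, C x -> `|x| <= M.

Definition nonexpansive_on (C : set X) (T : X -> X) : Prop :=
  forall x y, C x -> C y -> `|T x - T y| <= `|x - y|.

Definition block_sup (n : nat) (u : nat -> X) (y : X) (i : nat) : R :=
  \big[Order.max/0]_(A : {set 'I_n}) `|\sum_(k in A) (u (i + k.+1)%N - y)|.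

Definition block_limsup (n : nat) (u : nat -> X) (y : X) : \bar R :=
  limn_esup (fun i => (block_sup n u y i)%:E).

Definition cm_nonexpansive (C : set X) (T : X -> X) : Prop :=
  nonexpansive_on C T /\
  forall (n : nat) (y : X) (u : nat -> X), C y -> (forall i, C (u i)) ->
    (block_limsup n (fun i => T (u i)) (T y) <= block_limsup n u y)%E.

Definition minimal_for (T : X -> X) (K : set X) : Prop :=
  T @` K `<=` K /\
  forall L : set X, L `<=` K -> L !=set0 -> closed L -> is_convex L ->
    T @` L `<=` L -> L = K.

(** sequences equal in [X] = l_inf(X)/c_0(X) *)
Definition seq_equiv (v w : nat -> X) : Prop :=
  (fun i => `|v i - w i|) @ \oo --> (0 : R).

Definition avg_block_limsup (N : nat) (v : nat -> X) (x : X) : \bar R :=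
  limn_esup (fun i => (\big[Order.max/0]_(A : {set 'I_N})
     `|N%:R^-1 *: \sum_(k in A) (v (i + k.+1)%N - x)|)%:E).

Definition diam (K : set X) : \bar R :=
  ereal_sup [set (`|x - y|)%:E | x in K & y in K].

End Defs.

(* Main.v *)
Require Import Defs.
From HB Require Import structures.
From mathcomp Require Import all_boot all_order all_algebra.
From mathcomp Require Import all_classical all_reals all_analysis.
From mathcomp Require Import lra ring.
Import Order.TTheory GRing.Theory Num.Theory.
Import numFieldNormedType.Exports.
Local Open Scope classical_set_scope.
Local Open Scope ring_scope.
Section HB.
Context {R : realType} {X : normedModType R}.

Definition goodG (w : X) (G : set (X * R)) : Prop :=
  [/\ G (0, 0),
      (forall p q a, G p -> G q -> G (a *: p.1 + q.1, a * p.2 + q.2)),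
      (forall x a b, G (x, a) -> G (x, b) -> a = b),
      (forall x a, G (x, a) -> a <= `|x|) &
      G (w, `|w|)].

Lemma goodG0 w : goodG w [set (t *: w, t * `|w|) | t in [set: R]].
Proof.
split.
- by exists 0 => //; rewrite scale0r mul0r.
- move=> [p1 p2] [q1 q2] a [t _ [<- <-]] [s _ [<- <-]] /=.
  by exists (a * t + s) => //; rewrite scalerDl scalerA mulrDl mulrA.
- move=> x a b [t _ [<- <-]] [s _ []].
  have [->|w0] := eqVneq w 0; first by rewrite normr0 !mulr0.
  move=> /eqP; rewrite -subr_eq0 -scalerBl scaler_eq0 (negbTE w0) orbF subr_eq0.
  by move=> /eqP -> <-.
- move=> x a [t _ [<- <-]]; rewrite normrZ ler_wpM2r //; exact: ler_norm.
- by exists 1 => //; rewrite scale1r mul1r.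
Qed.

Lemma goodG_scale w A d a t : goodG w A -> A (d, a) -> A (t *: d, t * a).
Proof.
case=> g1 g2 _ _ _ Ada.
by have := g2 _ _ t Ada g1; rewrite /= addr0 addr0.
Qed.

Lemma goodG_ext w A x0 : goodG w A -> ~ (exists a, A (x0, a)) ->
  exists B, goodG w B /\ A `<` B.
Proof.
move=> gA nx0; have [g1 g2 g3 g4 g5] := gA.
pose S' := [set p.2 - `|p.1 - x0| | p in A].
have S'ne : S' !=set0 by exists (0 - `|0 - x0|); exists (0, 0).
have key : forall d1 a1 d2 a2, A (d1, a1) -> A (d2, a2) ->
    a2 - `|d2 - x0| <= `|d1 + x0| - a1.
  move=> d1 a1 d2 a2 A1 A2.
  have := g4 _ _ (g2 _ _ 1 A1 A2); rewrite /= scale1r mul1r => h.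
  have h2 : `|d1 + d2| <= `|d1 + x0| + `|d2 - x0|.
    rewrite (_ : d1 + d2 = (d1 + x0) + (d2 - x0)); first exact: ler_normD.
    by rewrite addrACA subrr addr0.
  lra.

have S'ub : has_ubound S'.
  by exists (`|0 + x0| - 0) => _ [[d a] Ada <-]; exact: key g1 Ada.
pose c := sup S'.
have ci : forall d a, A (d, a) -> a - `|d - x0| <= c.
  by move=> d a Ada; apply: ub_le_sup => //; exists (d, a).
have cii : forall d a, A (d, a) -> c <= `|d + x0| - a.
  by move=> d a Ada; apply: ge_sup => // _ [[d2 a2] A2 <-]; exact: key Ada A2.
pose B := [set (p.1 + t *: x0, p.2 + t * c) | p in A & t in [set: R]].
have AB : A `<=` B.
  by move=> [d a] Ada; exists (d, a) => //; exists 0 => //; rewrite scale0r mul0r !addr0.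
have Bx0 : B (x0, c) by exists (0, 0) => //; exists 1 => //; rewrite scale1r mul1r !add0r.
exists B; split; last first.
  split => //; move=> BA; apply: nx0; exists c; exact: BA.
split.
- exact: AB.
- move=> _ _ a [[d1 a1] A1 [t1 _ <-]] [[d2 a2] A2 [t2 _ <-]] /=.
  exists (a *: d1 + d2, a * a1 + a2); first exact: (g2 _ _ a A1 A2).
  exists (a * t1 + t2) => //=; congr (_, _).
    by rewrite scalerDr scalerDl scalerA -!addrA; congr (_ + _); rewrite addrCA.
  by rewrite mulrDr mulrDl mulrA -!addrA; congr (_ + _); rewrite addrCA.
- move=> x a b [[d1 a1] A1 [t1 _ /= [<- <-]]] [[d2 a2] A2 [t2 _ /= [e <-]]].
  have [t12|t12] := eqVneq t1 t2.
    subst t2; move/addIr: e => e; subst d2.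
    by rewrite (g3 _ _ _ A1 A2).
  exfalso; apply: nx0.
  have A21 := g2 _ _ (-1) A1 A2; rewrite /= scaleN1r mulN1r in A21.
  have ht : t1 - t2 != 0 by rewrite subr_eq0.
  have ex : x0 = (t1 - t2)^-1 *: (- d1 + d2).
    have -> : - d1 + d2 = (t1 - t2) *: x0.
      have e' : d2 = d1 + t1 *: x0 - t2 *: x0 by rewrite -e addrK.
      by rewrite e' addrA addKr scalerBl.
    by rewrite scalerK.
  by exists ((t1 - t2)^-1 * (- a1 + a2)); rewrite ex; exact: (@goodG_scale w A _ _ _ gA A21).
- move=> x a [[d a1] A1 [t _ /= [<- <-]]].
  have [t0|t0|->] := ltgtP t 0; last by rewrite scale0r mul0r !addr0; exact: g4.
  + set s := - t; have s0 : 0 < s by rewrite oppr_gt0.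
    have sn : s != 0 by rewrite gt_eqF.
    have := ci _ _ (@goodG_scale w A _ _ s^-1 gA A1).
    have -> : s^-1 *: d - x0 = s^-1 *: (d - s *: x0).
      by rewrite scalerBr scalerA mulVf // scale1r.
    rewrite normrZ gtr0_norm ?invr_gt0 // => h.
    have := ler_wpM2l (ltW s0) h.
    rewrite mulrBr !mulrA mulfV // !mul1r => h2.
    have -> : d + t *: x0 = d - s *: x0 by rewrite /s scaleNr opprK.
    have -> : t = - s by rewrite /s opprK.
    lra.
  + have tn : t != 0 by rewrite gt_eqF.
    have := cii _ _ (@goodG_scale w A _ _ t^-1 gA A1).
    have -> : t^-1 *: d + x0 = t^-1 *: (d + t *: x0).
      by rewrite scalerDr scalerA mulVf // scale1r.
    rewrite normrZ gtr0_norm ?invr_gt0 // => h.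
    have := ler_wpM2l (ltW t0) h.
    rewrite mulrBr !mulrA mulfV // !mul1r => h2.
    lra.
- exact: AB.
Qed.

Lemma norming (w : X) : exists f : X -> R,
  [/\ (forall a x y, f (a *: x + y) = a * f x + f y),
      (forall x, `|f x| <= `|x|) & f w = `|w|].
Proof.
pose P := fun G : set (X * R) => G = set0 \/ goodG w G.
have [] := @Zorn_bigcup _ P.
  move=> F FP Ftot.
  have [[G0 [FG0 [p0 G0p0]]]|nF] := pselect (exists G, F G /\ G !=set0); last first.
    left; apply/seteqP; split => // p [G FG Gp]; apply: nF; exists G; split => //.
    by exists p.
  have goodF : forall G p, F G -> G p -> goodG w G.
    move=> G p FG Gp; case: (FP _ FG) => // G0e; by rewrite G0e in Gp.
  have gG0 := goodF _ _ FG0 G0p0.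
  right; split.
  - by exists G0 => //; case: gG0.
  - move=> p q a [G1 FG1 G1p] [G2 FG2 G2q].
    case: (Ftot _ _ FG1 FG2) => [s12|s21].
    + exists G2 => //; case: (goodF _ _ FG2 G2q) => _ g2 _ _ _.
      by apply: g2 => //; exact: s12.
    + exists G1 => //; case: (goodF _ _ FG1 G1p) => _ g2 _ _ _.
      by apply: g2 => //; exact: s21.
  - move=> x a b [G1 FG1 G1p] [G2 FG2 G2q].
    case: (Ftot _ _ FG1 FG2) => [s12|s21].
    + case: (goodF _ _ FG2 G2q) => _ _ g3 _ _.
      exact: (g3 _ _ _ (s12 _ G1p) G2q).
    + case: (goodF _ _ FG1 G1p) => _ _ g3 _ _.
      exact: (g3 _ _ _ G1p (s21 _ G2q)).
  - move=> x a [G1 FG1 G1p]; case: (goodF _ _ FG1 G1p) => _ _ _ g4 _.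
    exact: g4.
  - by exists G0 => //; case: gG0.
move=> A [PA Amax].
have gA : goodG w A.
  case: PA => // A0; exfalso.
  apply: (Amax _ _ (or_intror (goodG0 w))); rewrite A0; split => //.
  move=> /(_ (w, `|w|)) h; have := h; case: (goodG0 w) => _ _ _ _ g5.
  by move=> /(_ g5).
have tot : forall x, exists a, A (x, a).
  move=> x; apply/not_existsP => nx.
  have [B [gB AB]] := @goodG_ext w A x gA (fun '(ex_intro a h) => nx a h).
  exact: (Amax _ AB (or_intror gB)).
have [f hf] := choice tot.
case: gA => g1 g2 g3 g4 g5.
have lin : forall a x y, f (a *: x + y) = a * f x + f y.
  move=> a x y; apply: (g3 _ _ _ (hf _)).
  exact: (g2 (x, f x) (y, f y) a (hf x) (hf y)).
exists f; split => //.
- move=> x; rewrite ler_norml; apply/andP; split; last exact: g4.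
  have := g4 _ _ (hf (- x)); rewrite normrN.
  have -> : f (- x) = - f x.
    have f0 : f 0 = 0 by have := lin 1 0 0; rewrite scale1r addr0 mul1r; lra.
    by have := lin (-1) x 0; rewrite scaleN1r addr0 f0 addr0 mulN1r.
  by rewrite lerNl.
- exact: g3 (hf w) g5.
Qed.

Lemma norming_cl (w : X) : exists f : X -> R,
  [/\ cont_lin_functional f, (forall x, `|f x| <= `|x|) & f w = `|w|].
Proof.
have [f [lin nf fw]] := norming w.
have f0 : f 0 = 0 by have := lin 1 0 0; rewrite scale1r addr0 mul1r; lra.
have fB : forall x y, f (x - y) = f x - f y.
  move=> x y; have := lin (-1) y x; rewrite scaleN1r addrC mulN1r => ->.
  by rewrite addrC.
exists f; split => //; split => // x.
apply/cvgrPdist_lt => e e0.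
have : \forall t \near x, `|x - t| < e.
  by apply: (@cvgr_dist_lt _ _ _ (nbhs x) _ id) => //; exact: cvg_id.
apply: filterS => t /= h; rewrite -fB; exact: le_lt_trans (nf _) h.
Qed.

Lemma cluster_ball (F : set_system X) z y r E :
  weak_cluster F z -> F E -> (forall p, E p -> `|p - y| <= r) -> `|z - y| <= r.
Proof.
move=> hz FE hE.
have [f [[lin fc] nf fw]] := norming_cl (z - y).
have f0 : f 0 = 0 by have := lin 1 0 0; rewrite scale1r addr0 mul1r; lra.
have fB : forall x y, f (x - y) = f x - f y.
  move=> x y'; have := lin (-1) y' x; rewrite scaleN1r addrC mulN1r => ->.
  by rewrite addrC.
apply/ler_addgt0Pr => e e0.
have [|p [Ep hp]] := hz 1%N (fun _ => f) _ e e0 E FE.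
  by move=> _; split.
have {}hp := hp ord0.
rewrite -fw fB.
have := hE _ Ep; have := nf (p - y); rewrite fB.
move: hp; rewrite ltr_norml => /andP[h1 h2].
move=> /ler_normlP [_ h3] h4; lra.
Qed.

Lemma closure_approx (L : set X) y : closure L y ->
  forall e, 0 < e -> exists p, L p /\ `|y - p| < e.
Proof.
move=> yL e e0; have [p [Lp bp]] := yL _ (nbhsx_ballx y e e0).
by exists p; split => //; move: bp; rewrite -ball_normE.
Qed.

Lemma closedP' (L : set X) :
  (forall y, (forall e, 0 < e -> exists p, L p /\ `|y - p| < e) -> L y) -> closed L.
Proof. by move=> h y /closure_approx; exact: h. Qed.

Lemma wc_closed (K : set X) : weakly_compact K -> closed K.
Proof.
move=> hKw y /closure_approx yK.
pose B := fun r : R => K `&` [set p | `|p - y| <= r].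
pose F := filter_from [set r : R | 0 < r] B.
have FF : ProperFilter F.
  apply: filter_from_proper.
    apply: filter_from_filter; first by exists 1 => /=.
    move=> r1 r2 r10 r20; exists (Num.min r1 r2) => /=; first by rewrite lt_min r10.
    move=> p [Kp hp]; split; split => //; apply: (le_trans hp);
      by rewrite ge_min lexx ?orbT.
  move=> r r0; have [p [Kp hp]] := yK r r0; exists p; split => //.
  by rewrite /= distrC ltW.
have FK : F K by exists 1 => //= p [].
have [z [Kz hz]] := hKw F FF FK.
have zy : forall r, 0 < r -> `|z - y| <= r.
  move=> r r0; apply: (@cluster_ball F z y r (B r) hz); first by exists r.
  by move=> p [].
have : z = y.
  apply/eqP; rewrite -subr_eq0 -normr_le0; apply/ler_addgt0Pr => e e0.
  by rewrite add0r; exact: zy.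
by move=> <-.
Qed.

Lemma approx_closed (L : set X) y : closed L ->
  (forall e, 0 < e -> exists p, L p /\ `|y - p| < e) -> L y.
Proof.
move=> cL h; apply: cL => B /nbhs_ballP [e /= e0 hB].
have [p [Lp yp]] := h e e0; exists p; split => //; apply: hB.
by rewrite -ball_normE.
Qed.

Definition Sset (K : set X) (P : set X) (rho : R) :=
  [set u | K u /\ forall y, P y -> `|u - y| <= rho].

Lemma Sset_closed K P rho : closed K -> closed (Sset K P rho).
Proof.
move=> cK; apply: closedP' => y hy; split.
  apply: approx_closed cK _ => e e0; have [p [[Kp _] yp]] := hy e e0.
  by exists p.
move=> c Pc; apply/ler_addgt0Pr => e e0.
have [p [[_ hp] yp]] := hy e e0.
rewrite -[y](subrK p) -addrA; apply: (le_trans (ler_normD _ _)).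
by have := hp _ Pc; have := ltW yp; lra.
Qed.

Lemma Sset_convex K P rho : is_convex K -> is_convex (Sset K P rho).
Proof.
move=> cK x y t [Kx hx] [Ky hy] t01; split; first exact: cK.
move=> c Pc.
have -> : t *: x + (1 - t) *: y - c = t *: (x - c) + (1 - t) *: (y - c).
  by rewrite !scalerBr addrACA -opprD -scalerDl [t + _]addrC subrK scale1r.
case/andP: t01 => t0 t1.
apply: (le_trans (ler_normD _ _)); rewrite !normrZ !ger0_norm ?subr_ge0 //.
have := hx _ Pc; have := hy _ Pc; nra.
Qed.

Lemma diametral (K : set X) (T : X -> X) :
  is_convex K -> closed K -> T @` K `<=` K -> nonexpansive_on K T ->
  minimal_for T K ->
  forall z rho, K z -> (forall y, K y -> `|z - y| <= rho) ->
  forall p q, K p -> K q -> `|p - q| <= rho.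
Proof.
move=> cK clK TK neT [_ hmin] z rho Kz hz.
have rho0 : 0 <= rho by have := hz _ Kz; rewrite subrr normr0.
pose L := Sset K K rho.
have LK : L = K.
  apply: (hmin); first by move=> u [].
  - by exists z.
  - exact: Sset_closed.
  - exact: Sset_convex.
  move=> _ [u [Ku hu] <-].
  pose B := Sset K (fun c => c = T u) rho.
  have BK : B = K.
    apply: (hmin); first by move=> y [].
    - by exists (T u); split; [apply: TK; exists u|move=> c ->; rewrite subrr normr0].
    - exact: Sset_closed.
    - exact: Sset_convex.
    move=> _ [y [Ky _] <-]; split; first by apply: TK; exists y.
    move=> c ->; rewrite distrC; apply: le_trans (neT _ _ Ku Ky) _; exact: hu.
  split; first by apply: TK; exists u.
  move=> y Ky; have : B y by rewrite BK.
  by case=> _ /(_ (T u) erefl); rewrite distrC.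
move=> p q Kp Kq; have : L p by rewrite LK.
by case=> _ /(_ q Kq).
Qed.

Local Open Scope ereal_scope.
Lemma E1 (u : nat -> R) (c : R) : limn_esup (fun i => (u i)%:E) <= c%:E ->
  forall e, (0 < e)%R -> exists i0, forall i, (i0 <= i)%N -> (u i <= c + e)%R.
Proof.
move=> h e e0.
have : limn_esup (fun i => (u i)%:E) < (c + e)%:E.
  by apply: (le_lt_trans h); rewrite lte_fin ltrDl.
rewrite /limn_esup /limf_esup => /ereal_inf_lt [_ [V hV <-]] hlt.
case: hV => i0 _ hi0; exists i0 => i hi; rewrite -lee_fin.
apply: le_trans (ltW hlt); apply: ereal_sup_ubound; exists i => //.
exact: hi0.
Qed.

Lemma E2 (u : nat -> R) (c : R) :
  (exists i0, forall i, (i0 <= i)%N -> (u i <= c)%R) ->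
  limn_esup (fun i => (u i)%:E) <= c%:E.
Proof.
move=> [i0 hi0]; rewrite /limn_esup /limf_esup.
apply: (@le_trans _ _ (ereal_sup ((fun i => (u i)%:E) @` [set i | (i0 <= i)%N]))).
  apply: ereal_inf_lbound; exists [set i | (i0 <= i)%N] => //.
  by exists i0.
apply: ge_ereal_sup => _ [i hi <-]; rewrite lee_fin; exact: hi0.
Qed.
Local Close Scope ereal_scope.

Definition term (N : nat) (v : nat -> X) (y : X) (i : nat) : R :=
  \big[Order.max/0]_(A : {set 'I_N}) `|N%:R^-1 *: \sum_(k in A) (v (i + k.+1)%N - y)|.

Lemma term_block N v y i : term N v y i = N%:R^-1 * block_sup N v y i.
Proof.
rewrite /term /block_sup; elim/big_rec2: _ => [|A a b _ ->]; first by rewrite mulr0.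
by rewrite maxr_pMr ?invr_ge0 ?ler0n // normrZ ger0_norm // invr_ge0 ler0n.
Qed.

Lemma term_ge0 N v y i : 0 <= term N v y i.
Proof. by rewrite /term; apply: bigmax_ge_id. Qed.

Lemma card_le_N N (A : {set 'I_N}) : (#|A| <= N)%N.
Proof. by rewrite -[X in (_ <= X)%N]card_ord max_card. Qed.

Lemma term_lip N v y y' i : (0 < N)%N ->
  term N v y i <= term N v y' i + `|y - y'|.
Proof.
move=> N0; rewrite {1}/term; apply/bigmax_leP; split.
  by rewrite addr_ge0 // term_ge0.
move=> A _.
have -> : \sum_(k in A) (v (i + k.+1)%N - y) =
          \sum_(k in A) (v (i + k.+1)%N - y') + (y' - y) *+ #|A|.
  rewrite -sumr_const -big_split /=; apply: eq_bigr => k _.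
  by rewrite addrA subrK.
rewrite scalerDr; apply: (le_trans (ler_normD _ _)); apply: lerD.
  exact: (le_bigmax _ (fun A : {set 'I_N} => `|N%:R^-1 *: \sum_(k in A) (v (i + k.+1)%N - y')|) A).
have hN : 0 < N%:R :> R by rewrite ltr0n.
rewrite normrZ normrMn distrC -[`|y - y'| *+ _]mulr_natr ger0_norm ?invr_ge0 ?ler0n // mulrCA.
rewrite -[X in _ <= X]mulr1 ler_wpM2l // mulrC ler_pdivrMr // mul1r ler_nat.
exact: card_le_N.
Qed.

Lemma term_conv N v y1 y2 t i : 0 <= t <= 1 ->
  term N v (t *: y1 + (1 - t) *: y2) i <= t * term N v y1 i + (1 - t) * term N v y2 i.
Proof.
case/andP => t0 t1; rewrite {1}/term; apply/bigmax_leP; split.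
  by rewrite addr_ge0 // mulr_ge0 ?term_ge0 ?subr_ge0.
move=> A _.
have -> : \sum_(k in A) (v (i + k.+1)%N - (t *: y1 + (1 - t) *: y2)) =
    t *: \sum_(k in A) (v (i + k.+1)%N - y1) + (1 - t) *: \sum_(k in A) (v (i + k.+1)%N - y2).
  rewrite !scaler_sumr -big_split /=; apply: eq_bigr => k _.
  rewrite !scalerBr addrACA -scalerDl [t + _]addrC subrK scale1r.
  by rewrite opprD.
rewrite scalerDr !scalerA ![N%:R^-1 * _]mulrC -!scalerA.
apply: (le_trans (ler_normD _ _)); rewrite !normrZ !ger0_norm ?subr_ge0 //.
apply: lerD; apply: ler_wpM2l; rewrite ?subr_ge0 // term_block;
  apply: ler_wpM2l; rewrite ?invr_ge0 ?ler0n //;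
  exact: (le_bigmax _ (fun A : {set 'I_N} => `|\sum_(k in A) (v (i + k.+1)%N - _)|) A).
Qed.

Lemma term_full N v y i : (0 < N)%N ->
  `|N%:R^-1 *: \sum_(k < N) v (i + k.+1)%N - y| <= term N v y i.
Proof.
move=> N0.
have hN : N%:R != 0 :> R by rewrite pnatr_eq0 -lt0n.
have h := le_bigmax (0:R) (fun A : {set 'I_N} => `|N%:R^-1 *: \sum_(k in A) (v (i + k.+1)%N - y)|) (setTfor 'I_N). apply: (le_trans _ h).
rewrite /= big_split /= sumr_const cardsT card_ord.
have e1 : \sum_(k in setTfor 'I_N) v (i + k.+1)%N = \sum_(k < N) v (i + k.+1)%N.
  by apply: eq_bigl => k; rewrite inE.
by rewrite e1 -[(- y) *+ N](scaler_nat N (-y)) scalerDr scalerA mulVf // scale1r.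
Qed.

Lemma term_bound N v y i rho : (0 < N)%N -> 0 <= rho ->
  (forall k, `|v k - y| <= rho) -> term N v y i <= rho.
Proof.
move=> N0 r0 h; rewrite /term; apply/bigmax_leP; split => // A _.
have hN : 0 < N%:R :> R by rewrite ltr0n.
rewrite normrZ ger0_norm ?invr_ge0 ?ler0n // ler_pdivrMl //.
apply: (le_trans (ler_norm_sum _ _ _)).
apply: (@le_trans _ _ (\sum_(k in A) rho)).
  by apply: ler_sum => k _; exact: h.
rewrite sumr_const -[rho *+ _]mulr_natr mulrC ler_wpM2r // ler_nat; exact: card_le_N.
Qed.

Lemma conv_avg (K : set X) (f : nat -> X) N : is_convex K -> (forall k, K (f k)) ->
  (0 < N)%N -> K (N%:R^-1 *: \sum_(k < N) f k).
Proof.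
move=> cK Kf; elim: N => // -[_ _|N IH _]; first by rewrite big_ord1 invr1 scale1r.
have := IH isT; set a := N.+1%:R^-1 *: _ => Ka.
have hN : 0 < N.+1%:R :> R by rewrite ltr0n.
have hN2 : 0 < N.+2%:R :> R by rewrite ltr0n.
pose t : R := N.+1%:R / N.+2%:R.
have -> : N.+2%:R^-1 *: \sum_(k < N.+2) f k = t *: a + (1 - t) *: f N.+1.
  rewrite big_ord_recr /= scalerDr /a scalerA.
  have n1 : N.+1%:R != 0 :> R by rewrite gt_eqF.
  have n2 : N.+2%:R != 0 :> R by rewrite gt_eqF.
  congr (_ *: _ + _ *: _); rewrite /t.
    field; apply/andP; split; apply: lt0r_neq0; have := ler0n R N; lra.
  field; apply: lt0r_neq0; have := ler0n R N; lra.
apply: cK => //; rewrite /t divr_ge0 ?ler0n //= ler_pdivrMr // mul1r ler_nat.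
by [].
Qed.

Lemma cmT (K : set X) (T : X -> X) (hcm : cm_nonexpansive K T) N v y c :
  (0 < N)%N -> K y -> (forall i, K (v i)) ->
  (exists i0, forall i, (i0 <= i)%N -> term N v y i <= c) ->
  forall e, 0 < e -> exists i0, forall i, (i0 <= i)%N ->
    term N (fun i => T (v i)) (T y) i <= c + e.
Proof.
move=> N0 Ky Kv [i0 hi0] e e0.
have hN : 0 < N%:R :> R by rewrite ltr0n.
have tb : forall v y i, block_sup N v y i = N%:R * term N v y i.
  by move=> v' y' i; rewrite term_block mulrA mulfV ?gt_eqF // mul1r.
have hb : (block_limsup N v y <= (N%:R * c)%:E)%E.
  apply: E2; exists i0 => i hi; rewrite tb ler_pM2l //; exact: hi0.
have := le_trans (hcm.2 N y v Ky Kv) hb.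
move=> /E1 /(_ (N%:R * e)) [|i1 hi1]; first by rewrite mulr_gt0.
exists i1 => i hi; have := hi1 i hi; rewrite tb -mulrDr ler_pM2l //.
Qed.
End HB.

Theorem lemma3p7 (R : realType) (X : completeNormedModType R)
  (K : set X) (T : X -> X)
  (hK0 : K !=set0) (hKw : weakly_compact K) (hKc : is_convex K)
  (hTK : T @` K `<=` K) (hTcm : cm_nonexpansive K T)
  (hfix : ~ exists x, K x /\ T x = x) (hmin : minimal_for T K)
  (M : set (nat -> X))
  (hMK : forall v, M v -> forall i, K (v i))
  (hMsat : forall v w, M v -> (forall i, K (w i)) -> seq_equiv v w -> M w)
  (hM0 : M !=set0)
  (hMb : exists c : R, forall v, M v -> (limn_esup (fun i => (`|v i|)%:E) <= c%:E)%E)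
  (hMc : forall v w t, M v -> M w -> 0 <= t <= 1 ->
           M (fun i => t *: v i + (1 - t) *: w i))
  (hMT : forall v, M v -> M (fun i => T (v i))) :
  forall (x : X) (N : nat), K x -> (0 < N)%N ->
    ereal_sup [set avg_block_limsup N v x | v in M] = diam K.
Proof.
move=> x N Kx N0.
have clK := wc_closed _ hKw.
have neT := hTcm.1.
have avgE : forall v y, avg_block_limsup N v y = limn_esup (fun i => (term N v y i)%:E).
  by [].
set S := [set _ | v in M].
have hdist : forall p q, K p -> K q -> ((`|p - q|)%:E <= diam K)%E.
  by move=> p q Kp Kq; apply: ereal_sup_ubound; exists p => //; exists q.
apply/eqP; rewrite eq_le; apply/andP; split.
  apply: ge_ereal_sup => _ [v Mv <-]; rewrite avgE.
  have := hdist x x Kx Kx; case hd: (diam K) => [d| |] // h0.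
    apply: E2; exists 0%N => i _; apply: term_bound => //.
      by move: h0; rewrite subrr normr0 lee_fin.
    by move=> k; have := hdist _ _ (hMK _ Mv k) Kx; rewrite hd lee_fin.
  by rewrite leey.
rewrite leNgt; apply/negP => hlt.
have [rho [rho1 [hS hr hr1]]] : exists rho rho1 : R,
    [/\ (ereal_sup S <= rho%:E)%E, rho < rho1 & (rho1%:E < diam K)%E].
  move: hlt; case: (ereal_sup S) => [s| |]; case: (diam K) => [d| |] //=.
  - rewrite lte_fin => sd; exists s, ((s + d) / 2); split => //; rewrite ?lte_fin; lra.
  - by move=> _; exists s, (s + 1); split => //; rewrite ?ltry //; lra.
  - by move=> _; exists (d - 2), (d - 1); split => //; rewrite ?lte_fin ?leNye //; lra.
  - by move=> _; exists 0, 1; split => //; rewrite ?ltry ?leNye //; lra.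
have hM : forall v, M v -> (avg_block_limsup N v x <= rho%:E)%E.
  by move=> v Mv; apply: le_trans hS; apply: ereal_sup_ubound; exists v.
have [v0 Mv0] := hM0.
pose vn n := iter n (fun w i => T (w i)) v0.
have Mvn : forall n, M (vn n) by elim => [|n IH] //=; exact: hMT.
have Kvn : forall n i, K (vn n i) by move=> n i; exact: hMK (Mvn n) i.
pose L := [set y | K y /\ forall e, 0 < e -> exists n0, forall n, (n0 <= n)%N ->
   exists i0, forall i, (i0 <= i)%N -> term N (vn n) y i <= rho + e].
have LK : L = K.
  apply: hmin.2.
  - by move=> y [].
  - exists x; split => // e e0; exists 0%N => n _; exact: E1 (hM _ (Mvn n)) e e0.
  - apply: closedP' => y hy; split.
      apply: approx_closed clK _ => e e0; have [p [[Kp _] yp]] := hy e e0.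
      by exists p.
    move=> e e0.
    have e20 : 0 < e / 2 by rewrite divr_gt0.
    have [p [[Kp hp] yp]] := hy (e / 2) e20.
    have [n0 hn0] := hp (e / 2) e20.
    exists n0 => n hn; have [i0 hi0] := hn0 n hn; exists i0 => i hi.
    have := hi0 i hi; have := ltW yp; have := term_lip N (vn n) y p i N0; lra.
  - move=> y1 y2 t [K1 h1] [K2 h2] t01; split; first exact: hKc.
    move=> e e0; have [n1 hn1] := h1 e e0; have [n2 hn2] := h2 e e0.
    exists (maxn n1 n2) => n hn.
    have [i1 hi1] := hn1 n (leq_trans (leq_maxl _ _) hn).
    have [i2 hi2] := hn2 n (leq_trans (leq_maxr _ _) hn).
    exists (maxn i1 i2) => i hi.
    have := hi1 i (leq_trans (leq_maxl _ _) hi).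
    have := hi2 i (leq_trans (leq_maxr _ _) hi).
    have := term_conv N (vn n) y1 y2 t i t01.
    case/andP: t01 => t0 t1; nra.
  - move=> _ [y [Ky hy] <-]; split; first by apply: hTK; exists y.
    move=> e e0.
    have e20 : 0 < e / 2 by rewrite divr_gt0.
    have [n0 hn0] := hy (e / 2) e20; exists n0.+1 => -[//|m] hm.
    have [i1 hi1] := @cmT _ _ K T hTcm N (vn m) y _ N0 Ky (Kvn m) (hn0 m hm) (e / 2) e20.
    exists i1 => i hi; apply: le_trans (hi1 i hi) _; lra.
have fip : forall s : seq X, (forall y, List.In y s -> K y) ->
    exists n0, forall n, (n0 <= n)%N -> exists i0, forall i, (i0 <= i)%N ->
      forall y, List.In y s -> term N (vn n) y i <= rho + (rho1 - rho).
  elim => [|y s IH] hs.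
    by exists 0%N => n _; exists 0%N => i _ y [].
  have [Ky hy] : L y by rewrite LK; apply: hs; left.
  have hr0 : 0 < rho1 - rho by rewrite subr_gt0.
  have [n1 hn1] := hy (rho1 - rho) hr0.
  have [n2 hn2] := IH (fun z hz => hs z (or_intror hz)).
  exists (maxn n1 n2) => n hn.
  have [i1 hi1] := hn1 n (leq_trans (leq_maxl _ _) hn).
  have [i2 hi2] := hn2 n (leq_trans (leq_maxr _ _) hn).
  exists (maxn i1 i2) => i hi z [<-|hz].
    exact: hi1 i (leq_trans (leq_maxl _ _) hi).
  exact: hi2 i (leq_trans (leq_maxr _ _) hi) z hz.
pose Bs := fun s : seq X => [set p | K p /\ forall y, List.In y s -> `|p - y| <= rho1].
pose D := [set s : seq X | forall y, List.In y s -> K y].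
pose F := filter_from D Bs.
have FF : ProperFilter F.
  apply: filter_from_proper.
    apply: filter_from_filter; first by exists [::] => y [].
    move=> s1 s2 D1 D2; exists (s1 ++ s2).
      by move=> y hy; case: (List.in_app_or _ _ _ hy) => ?; [exact: D1|exact: D2].
    move=> p [Kp hp]; split; split => // y hy; apply: hp; apply: List.in_or_app;
      by [left|right].
  move=> s Ds; have [n0 hn0] := fip s Ds; have [i0 hi0] := hn0 n0 (leqnn _).
  exists (N%:R^-1 *: \sum_(k < N) vn n0 (i0 + k.+1)%N); split.
    apply: (@conv_avg _ _ K (fun k => vn n0 (i0 + k.+1)%N) N hKc) => // k.
  move=> y hy; apply: le_trans (term_full N (vn n0) y i0 N0) _.
  have := hi0 i0 (leqnn _) y hy; lra.
have FK : F K by exists [::] => // p [].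
have [z [Kz hz]] := hKw F FF FK.
have zb : forall y, K y -> `|z - y| <= rho1.
  move=> y Ky; apply: (@cluster_ball _ _ F z y rho1 (Bs [:: y]) hz).
    by exists [:: y] => // w [<-|[]].
  by move=> p [_ hp]; apply: hp; left.
have hall := @diametral _ _ K T hKc clK hTK neT hmin z rho1 Kz zb.
have : (diam K <= rho1%:E)%E.
  by apply: ge_ereal_sup => _ [p Kp [q Kq <-]]; rewrite lee_fin; exact: hall.
by rewrite leNgt hr1.
Qed.
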